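(* Let $G$ be a connected simple graph on $n\ge2$ vertices, let $\alpha\in\mathbb{R}$, and suppose the vertices are labeled so that $({}^\alpha m)_1+d_1\ge({}^\alpha m)_2+d_2\ge\cdots\ge({}^\alpha m)_n+d_n$. Let $\Delta$ be the maximum degree of $G$ and $N=\max_{i\sim j}d_j^\alpha/d_i^\alpha$. Then for $1\le i\le n$, writing $s_k=({}^\alpha m)_k+d_k$, \[\rho(Q(G))\le \frac{s_i+\Delta-N+\sqrt{(s_i-\Delta+N)^2+4N\sum_{k=1}^{i-1}(s_k-s_i)}}{2}.\] Equality holds if and only if $s_1=s_2=\cdots=s_n$, or there is $t$ with $2\le t\le i$ such that: if $\alpha=0$, $G$ is a bidegreed graph with $d_1=\cdots=d_{t-1}=n-1>d_t=\cdots=d_n$; if $\alpha>0$, $G$ is a bidegreed graph with $s_1>s_2=\cdots=s_n$ and $d_1=n-1>d_2=\cdots=d_n$. (For $\alpha<0$ only the first alternative occurs.)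
   Context: $Q(G)=D(G)+A(G)$ is the signless Laplacian matrix, where $A(G)$ is the adjacency matrix and $D(G)=\mathrm{diag}(d_1,\dots,d_n)$ is the diagonal matrix of vertex degrees. $i\sim j$ means $v_i,v_j$ adjacent. The generalized average degree is $({}^\alpha m)_i=\frac{\sum_{j\sim i}d_j^\alpha}{d_i^\alpha}$. $\rho$ is the spectral radius. A bidegreed graph has exactly two distinct vertex degrees. An empty sum equals $0$. *)

(* Defs.v *)
From Stdlib Require Import Reals Lra Lia Relations.
Open Scope R_scope.

(* Vertices are the naturals 0, ..., n-1 (paper's v_1..v_n shifted by one).
   A graph is given by a boolean adjacency relation [adj]; only its values on
   vertices < n matter. *)

Fixpoint sumR (f : nat -> R) (n : nat) : R :=
  match n with
  | O => 0
  | S k => sumR f k + f k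
  end.

Definition simple_graph (n : nat) (adj : nat -> nat -> bool) : Prop :=
  (forall i j, (i < n)%nat -> (j < n)%nat -> adj i j = adj j i) /\
  (forall i, (i < n)%nat -> adj i i = false).

Definition edge_rel (n : nat) (adj : nat -> nat -> bool) : relation nat :=
  fun a b => (a < n)%nat /\ (b < n)%nat /\ adj a b = true.

Definition connected (n : nat) (adj : nat -> nat -> bool) : Prop :=
  forall i j, (i < n)%nat -> (j < n)%nat -> clos_refl_trans nat (edge_rel n adj) i j.

Definition deg (n : nat) (adj : nat -> nat -> bool) (i : nat) : R :=
  sumR (fun j => if adj i j then 1 else 0) n.

Definition gen_avg_deg (n : nat) (adj : nat -> nat -> bool) (alpha : R) (i : nat) : R :=
  sumR (fun j => if adj i j then Rpower (deg n adj j) alpha else 0) n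
  / Rpower (deg n adj i) alpha.

Definition signless_laplacian (n : nat) (adj : nat -> nat -> bool) (i j : nat) : R :=
  (if Nat.eqb i j then deg n adj i else 0) + (if adj i j then 1 else 0).

Definition eigenvalue (n : nat) (M : nat -> nat -> R) (lam : R) : Prop :=
  exists x : nat -> R,
    (exists k, (k < n)%nat /\ x k <> 0) /\
    forall i, (i < n)%nat -> sumR (fun j => M i j * x j) n = lam * x i.

(* r is the spectral radius of M: the maximum modulus of an eigenvalue.
   (Only real eigenvalues are considered; for the real symmetric matrix Q
   this is the whole spectrum.) *)
Definition spectral_radius (n : nat) (M : nat -> nat -> R) (r : R) : Prop :=
  (exists lam, eigenvalue n M lam /\ Rabs lam = r) /\
  (forall lam, eigenvalue n M lam -> Rabs lam <= r).

Definition is_max_degree (n : nat) (adj : nat -> nat -> bool) (D : R) : Prop :=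
  (exists i, (i < n)%nat /\ deg n adj i = D) /\
  (forall i, (i < n)%nat -> deg n adj i <= D).

Definition is_max_ratio (n : nat) (adj : nat -> nat -> bool) (alpha N : R) : Prop :=
  (exists i j, (i < n)%nat /\ (j < n)%nat /\ adj i j = true /\
     Rpower (deg n adj j) alpha / Rpower (deg n adj i) alpha = N) /\
  (forall i j, (i < n)%nat -> (j < n)%nat -> adj i j = true ->
     Rpower (deg n adj j) alpha / Rpower (deg n adj i) alpha <= N).

Definition bidegreed (n : nat) (adj : nat -> nat -> bool) : Prop :=
  exists a b, a <> b /\
    (exists i, (i < n)%nat /\ deg n adj i = a) /\
    (exists j, (j < n)%nat /\ deg n adj j = b) /\
    (forall k, (k < n)%nat -> deg n adj k = a \/ deg n adj k = b).

(* Main.v *)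
Require Import Defs.
From Stdlib Require Import Reals Lra Lia Relations.
Open Scope R_scope.

Lemma sumR_ext (f g : nat -> R) n :
  (forall j, (j < n)%nat -> f j = g j) -> sumR f n = sumR g n.
Proof. induction n; simpl; intros H; [reflexivity|]. rewrite IHn by (intros; apply H; lia). rewrite H by lia. reflexivity. Qed.

Lemma sumR_plus (f g : nat -> R) n : sumR (fun j => f j + g j) n = sumR f n + sumR g n.
Proof. induction n; simpl; [lra|]. rewrite IHn. lra. Qed.

Lemma sumR_minus (f g : nat -> R) n : sumR (fun j => f j - g j) n = sumR f n - sumR g n.
Proof. induction n; simpl; [lra|]. rewrite IHn. lra. Qed.

Lemma sumR_scal (c : R) (f : nat -> R) n : sumR (fun j => c * f j) n = c * sumR f n.
Proof. induction n; simpl; [lra|]. rewrite IHn. lra. Qed.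

Lemma sumR_zero n : sumR (fun _ => 0) n = 0.
Proof. induction n; simpl; [lra|]. rewrite IHn. lra. Qed.

Lemma sumR_const c n : sumR (fun _ => c) n = c * INR n.
Proof. induction n; simpl sumR; [simpl; lra|]. rewrite IHn, S_INR. lra. Qed.

Lemma sumR_le (f g : nat -> R) n :
  (forall j, (j < n)%nat -> f j <= g j) -> sumR f n <= sumR g n.
Proof. induction n; simpl; intros H; [lra|]. assert (f n <= g n) by (apply H; lia).
  assert (sumR f n <= sumR g n) by (apply IHn; intros; apply H; lia). lra. Qed.

Lemma sumR_nonneg (f : nat -> R) n :
  (forall j, (j < n)%nat -> 0 <= f j) -> 0 <= sumR f n.
Proof. intros H. rewrite <- (sumR_zero n). apply sumR_le. auto. Qed.

Lemma sumR_eq0 (f : nat -> R) n :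
  (forall j, (j < n)%nat -> 0 <= f j) -> sumR f n = 0 -> forall j, (j < n)%nat -> f j = 0.
Proof. induction n; simpl; intros H E j Hj; [lia|].
  assert (0 <= f n) by (apply H; lia).
  assert (0 <= sumR f n) by (apply sumR_nonneg; intros; apply H; lia).
  destruct (Nat.eq_dec j n) as [->|]; [lra|]. apply IHn; [intros; apply H; lia|lra|lia]. Qed.

Lemma sumR_ge_term (f : nat -> R) n k :
  (forall j, (j < n)%nat -> 0 <= f j) -> (k < n)%nat -> f k <= sumR f n.
Proof. induction n; simpl; intros H Hk; [lia|].
  assert (0 <= f n) by (apply H; lia).
  assert (0 <= sumR f n) by (apply sumR_nonneg; intros; apply H; lia).
  destruct (Nat.eq_dec k n) as [->|]; [lra|].
  assert (f k <= sumR f n) by (apply IHn; [intros; apply H; lia|lia]). lra. Qed.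

Lemma sumR_delta (f : nat -> R) n k :
  (k < n)%nat -> sumR (fun j => if Nat.eqb k j then f j else 0) n = f k.
Proof. induction n; simpl; intros Hk; [lia|].
  destruct (Nat.eq_dec k n) as [->|].
  - rewrite Nat.eqb_refl. rewrite (sumR_ext _ (fun _ => 0)). rewrite sumR_zero. lra.
    intros j Hj. destruct (Nat.eqb_spec n j); [lia|reflexivity].
  - destruct (Nat.eqb_spec k n); [lia|]. rewrite IHn by lia. lra. Qed.

Lemma sumR_trunc (f : nat -> R) i n :
  (i <= n)%nat -> (forall j, (i <= j < n)%nat -> f j = 0) -> sumR f n = sumR f i.
Proof. induction n; intros Hi H. - replace i with 0%nat by lia. reflexivity.
  - destruct (Nat.eq_dec i (S n)) as [->|]; [reflexivity|]. simpl. rewrite IHn by (try lia; intros; apply H; lia).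
    rewrite H by lia. lra. Qed.

Lemma sumR_abs (f : nat -> R) n : Rabs (sumR f n) <= sumR (fun j => Rabs (f j)) n.
Proof. induction n; simpl. - rewrite Rabs_R0; lra.
  - eapply Rle_trans; [apply Rabs_triang|]. lra. Qed.

Lemma argmax (z : nat -> R) n : (0 < n)%nat -> exists p, (p < n)%nat /\ forall j, (j < n)%nat -> z j <= z p.
Proof. induction n; intros Hn; [lia|]. destruct (Nat.eq_dec n 0) as [->|].
  - exists 0%nat. split; [lia|]. intros j Hj. replace j with 0%nat by lia. lra.
  - destruct IHn as [p [Hp H]]; [lia|]. destruct (Rle_dec (z n) (z p)).
    + exists p. split; [lia|]. intros j Hj. destruct (Nat.eq_dec j n) as [->|]; [lra|]. apply H; lia.
    + exists n. split; [lia|]. intros j Hj. destruct (Nat.eq_dec j n) as [->|]; [lra|].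
      assert (z j <= z p) by (apply H; lia). lra. Qed.

Lemma chain (n : nat) (M : nat -> nat -> R) (v x : nat -> R) (lam Z : R) q :
  (forall k j, (k < n)%nat -> (j < n)%nat -> 0 <= M k j) ->
  (forall k, (k < n)%nat -> 0 < v k) ->
  (forall i, (i < n)%nat -> sumR (fun j => M i j * x j) n = lam * x i) ->
  (forall j, (j < n)%nat -> Rabs (x j / v j) <= Z) -> (q < n)%nat ->
  Rabs lam * Rabs (x q) <= sumR (fun j => M q j * v j * Rabs (x j / v j)) n /\
  sumR (fun j => M q j * v j * Rabs (x j / v j)) n <= Z * sumR (fun j => M q j * v j) n.
Proof.
  intros HM Hv He HZ Hq. split.
  - rewrite <- Rabs_mult. rewrite <- (He q Hq). eapply Rle_trans; [apply sumR_abs|].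
    apply Req_le, sumR_ext. intros j Hj. rewrite Rabs_mult.
    rewrite (Rabs_pos_eq (M q j)) by (apply HM; auto).
    replace (x j) with (v j * (x j / v j)) at 1 by (field; specialize (Hv j Hj); lra).
    rewrite Rabs_mult, (Rabs_pos_eq (v j)) by (left; apply Hv; auto). ring.
  - rewrite <- sumR_scal. apply sumR_le. intros j Hj.
    assert (0 <= M q j * v j) by (apply Rmult_le_pos; [apply HM; auto| left; apply Hv; auto]).
    specialize (HZ j Hj). nra.
Qed.

Lemma maxarg (n : nat) (M : nat -> nat -> R) (v : nat -> R) (theta lam : R) :
  (forall k j, (k < n)%nat -> (j < n)%nat -> 0 <= M k j) ->
  (forall k, (k < n)%nat -> 0 < v k) ->
  (forall k, (k < n)%nat -> sumR (fun j => M k j * v j) n <= theta * v k) ->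
  eigenvalue n M lam -> Rabs lam <= theta.
Proof.
  intros HM Hv Hrow [x [[k0 [Hk0 Hx0]] He]].
  destruct (argmax (fun j => Rabs (x j / v j)) n) as [p [Hp Hmax]]; [lia|].
  set (Z := Rabs (x p / v p)) in *.
  destruct (chain n M v x lam Z p HM Hv He Hmax Hp) as [C1 C2].
  specialize (Hrow p Hp).
  assert (Zpos : 0 < Z).
  { specialize (Hmax k0 Hk0). assert (0 < Rabs (x k0 / v k0)).
    apply Rabs_pos_lt. unfold Rdiv. apply Rmult_integral_contrapositive; split; auto.
    apply Rinv_neq_0_compat. specialize (Hv k0 Hk0); lra. lra. }
  assert (Rabs (x p) = Z * v p).
  { unfold Z. unfold Rdiv. rewrite Rabs_mult, Rabs_inv, (Rabs_pos_eq (v p)) by (left; auto).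
    field. specialize (Hv p Hp); lra. }
  assert (Rabs lam * (Z * v p) <= theta * (Z * v p)) by nra.
  assert (0 < Z * v p) by (specialize (Hv p Hp); nra).
  nra.
Qed.

Lemma maxarg_eq (n : nat) (adj : nat -> nat -> bool) (M : nat -> nat -> R) (v : nat -> R) (theta lam : R) :
  connected n adj ->
  (forall k j, (k < n)%nat -> (j < n)%nat -> 0 <= M k j) ->
  (forall k j, (k < n)%nat -> (j < n)%nat -> adj k j = true -> 0 < M k j) ->
  (forall k, (k < n)%nat -> 0 < v k) ->
  (forall k, (k < n)%nat -> sumR (fun j => M k j * v j) n <= theta * v k) ->
  eigenvalue n M lam -> Rabs lam = theta ->
  forall k, (k < n)%nat -> sumR (fun j => M k j * v j) n = theta * v k.
Proof.
  intros Hc HM Hadj Hv Hrow [x [[k0 [Hk0 Hx0]] He]] Hl.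
  destruct (argmax (fun j => Rabs (x j / v j)) n) as [p [Hp Hmax]]; [lia|].
  set (Z := Rabs (x p / v p)) in *.
  assert (Zpos : 0 < Z).
  { specialize (Hmax k0 Hk0). assert (0 < Rabs (x k0 / v k0)).
    apply Rabs_pos_lt. unfold Rdiv. apply Rmult_integral_contrapositive; split; auto.
    apply Rinv_neq_0_compat. specialize (Hv k0 Hk0); lra. lra. }
  assert (key : forall q, (q < n)%nat -> Rabs (x q / v q) = Z ->
     sumR (fun j => M q j * v j) n = theta * v q /\
     forall j, (j < n)%nat -> 0 < M q j -> Rabs (x j / v j) = Z).
  { intros q Hq Hzq.
    destruct (chain n M v x lam Z q HM Hv He Hmax Hq) as [C1 C2].
    assert (Rabs (x q) = Z * v q).
    { rewrite <- Hzq. unfold Rdiv. rewrite Rabs_mult, Rabs_inv, (Rabs_pos_eq (v q)) by (left; auto).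
      field. specialize (Hv q Hq); lra. }
    specialize (Hrow q Hq). rewrite Hl in C1.
    assert (E1 : sumR (fun j => M q j * v j) n = theta * v q) by nra.
    split; [exact E1|].
    assert (E2 : sumR (fun j => M q j * v j * (Z - Rabs (x j / v j))) n = 0).
    { rewrite (sumR_ext _ (fun j => Z * (M q j * v j) - M q j * v j * Rabs (x j / v j)))
        by (intros; ring).
      rewrite sumR_minus, sumR_scal. nra. }
    intros j Hj HMj.
    assert (T : M q j * v j * (Z - Rabs (x j / v j)) = 0).
    { apply (sumR_eq0 (fun j => M q j * v j * (Z - Rabs (x j / v j))) n); auto.
      intros j' Hj'. apply Rmult_le_pos; [apply Rmult_le_pos; [apply HM; auto| left; apply Hv; auto]|].
      specialize (Hmax j' Hj'). simpl in Hmax. lra. } specialize (Hv j Hj).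
    assert (0 < M q j * v j) by nra.
    apply Rmult_integral in T. destruct T; lra. }
  assert (prop : forall a b, clos_refl_trans nat (edge_rel n adj) a b -> (a < n)%nat ->
            Rabs (x a / v a) = Z -> (b < n)%nat /\ Rabs (x b / v b) = Z).
  { intros a b H. induction H as [a b [Ha [Hb Hab]]| a | a b c _ IH1 _ IH2]; intros Han Hza.
    - split; auto. apply (proj2 (key a Ha Hza)); auto.
    - auto.
    - destruct (IH1 Han Hza). apply IH2; auto. }
  intros k Hk. destruct (prop p k (Hc p k Hp Hk) Hp eq_refl) as [_ Hzk].
  exact (proj1 (key k Hk Hzk)).
Qed.

Lemma ind01 (b : bool) : 0 <= (if b then 1 else 0) <= 1.
Proof. destruct b; lra. Qed.

Lemma deg_nonneg n adj k : 0 <= deg n adj k.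
Proof. unfold deg. apply sumR_nonneg. intros j _. apply ind01. Qed.

Lemma sum_neq n k : (k < n)%nat ->
  sumR (fun j => if Nat.eqb k j then 0 else 1) n = INR n - 1.
Proof. intros Hk. rewrite (sumR_ext _ (fun j => 1 - (if Nat.eqb k j then 1 else 0))).
  rewrite sumR_minus, sumR_const, (sumR_delta (fun _ => 1)) by exact Hk. lra.
  intros j _. destruct (Nat.eqb k j); lra. Qed.

Lemma deg_le n adj k : simple_graph n adj -> (k < n)%nat -> deg n adj k <= INR n - 1.
Proof. intros [_ Hirr] Hk. rewrite <- (sum_neq n k Hk). unfold deg. apply sumR_le.
  intros j Hj. destruct (Nat.eqb_spec k j) as [->|].
  - rewrite Hirr by exact Hj. lra.
  - destruct (adj k j); lra. Qed.

Lemma deg_full n adj k : simple_graph n adj -> (k < n)%nat ->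
  (forall j, (j < n)%nat -> j <> k -> adj k j = true) -> deg n adj k = INR n - 1.
Proof. intros [_ Hirr] Hk H. rewrite <- (sum_neq n k Hk). unfold deg. apply sumR_ext.
  intros j Hj. destruct (Nat.eqb_spec k j) as [->|].
  - rewrite Hirr by exact Hj. lra.
  - rewrite H by auto. lra. Qed.

Lemma full_of_deg n adj k : simple_graph n adj -> (k < n)%nat -> deg n adj k = INR n - 1 ->
  forall j, (j < n)%nat -> j <> k -> adj k j = true.
Proof. intros [Hs Hirr] Hk Hd.
  assert (E : sumR (fun j => (if Nat.eqb k j then 0 else 1) - (if adj k j then 1 else 0)) n = 0).
  { rewrite sumR_minus, sum_neq by exact Hk. unfold deg in Hd. lra. }
  intros j Hj Hjk.
  assert (T : (if Nat.eqb k j then 0 else 1) - (if adj k j then 1 else 0) = 0).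
  { apply (sumR_eq0 (fun j => (if Nat.eqb k j then 0 else 1) - (if adj k j then 1 else 0)) n); auto.
    intros j' Hj'. destruct (Nat.eqb_spec k j') as [->|].
    - rewrite Hirr by exact Hj'. lra.
    - destruct (adj k j'); lra. } destruct (Nat.eqb_spec k j); [lia|]. destruct (adj k j); [reflexivity|lra].
Qed.

Lemma deg_pos n adj k : (2 <= n)%nat -> connected n adj -> (k < n)%nat -> 1 <= deg n adj k.
Proof. intros Hn Hc Hk.
  set (j := if Nat.eqb k 0 then 1%nat else 0%nat).
  assert (Hj : (j < n)%nat) by (unfold j; destruct (Nat.eqb k 0); lia).
  assert (Hjk : j <> k) by (unfold j; destruct (Nat.eqb_spec k 0); lia).
  pose proof (clos_rt_rt1n _ _ _ _ (Hc k j Hk Hj)) as H.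
  inversion H as [|? z ? Hkz0 Hrest]; [congruence|]. subst.
  destruct H0 as [_ [Hz Hkz]]. rename y into z.
  unfold deg. eapply Rle_trans; [|apply (sumR_ge_term _ n z)]; auto.
  - simpl. rewrite Hkz. lra.
  - intros; apply ind01. Qed.

Lemma Rpower_pos x a : 0 < Rpower x a.
Proof. unfold Rpower. apply exp_pos. Qed.

Lemma Rpower_zero x : Rpower x 0 = 1.
Proof. unfold Rpower. rewrite Rmult_0_l. apply exp_0. Qed.

Lemma Rpower_inj x y a : a <> 0 -> 0 < x -> 0 < y -> Rpower x a = Rpower y a -> x = y.
Proof. intros Ha Hx Hy E. unfold Rpower in E.
  assert (a * ln x = a * ln y).
  { destruct (Rtotal_order (a * ln x) (a * ln y)) as [L|[L|L]]; auto;
    apply exp_increasing in L; lra. }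
  assert (ln x = ln y) by (apply Rmult_eq_reg_l with a; auto).
  destruct (Rtotal_order x y) as [L|[L|L]]; auto.
  - apply ln_increasing in L; auto; lra.
  - apply ln_increasing in L; auto; lra. Qed.

Lemma Rpower_antimono x y a : a <= 0 -> 0 < y -> y < x -> Rpower x a <= Rpower y a.
Proof. intros Ha Hy Hxy. unfold Rpower.
  assert (ln y < ln x) by (apply ln_increasing; auto).
  assert (a * ln x <= a * ln y) by nra.
  destruct H0 as [L|L]; [left; apply exp_increasing; auto| rewrite L; lra]. Qed.

Lemma gen_avg_mul n adj a k :
  gen_avg_deg n adj a k * Rpower (deg n adj k) a =
  sumR (fun j => if adj k j then Rpower (deg n adj j) a else 0) n.
Proof. unfold gen_avg_deg. field. pose proof (Rpower_pos (deg n adj k) a). lra. Qed.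

Lemma gen_avg_nonneg n adj a k : 0 <= gen_avg_deg n adj a k.
Proof. unfold gen_avg_deg. apply Rmult_le_pos.
  - apply sumR_nonneg. intros j _. destruct (adj k j); [left; apply Rpower_pos|lra].
  - left. apply Rinv_0_lt_compat, Rpower_pos. Qed.

Lemma gen_avg_zero n adj k : gen_avg_deg n adj 0 k = deg n adj k.
Proof. unfold gen_avg_deg, deg. rewrite Rpower_zero.
  rewrite (sumR_ext _ (fun j => if adj k j then 1 else 0)). lra.
  intros j _. rewrite Rpower_zero. reflexivity. Qed.

Lemma gen_avg_const n adj a k D : (k < n)%nat -> (forall j, (j < n)%nat -> deg n adj j = D) ->
  gen_avg_deg n adj a k = deg n adj k.
Proof. intros Hk H. unfold gen_avg_deg.
  rewrite (sumR_ext _ (fun j => Rpower D a * (if adj k j then 1 else 0))).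
  rewrite sumR_scal. fold (deg n adj k). rewrite H by exact Hk. field.
  pose proof (Rpower_pos D a). lra.
  intros j Hj. rewrite H by exact Hj. destruct (adj k j); ring. Qed.

Definition sv n adj alpha k := gen_avg_deg n adj alpha k + deg n adj k.
Definition wr n adj alpha k j := Rpower (deg n adj j) alpha / Rpower (deg n adj k) alpha.

Definition slack n adj alpha Delta N (u : nat -> R) (sp : R) k :=
  (Delta - deg n adj k) * (u k - 1) +
  sumR (fun j => if Nat.eqb k j then 0 else (N - (if adj k j then wr n adj alpha k j else 0)) * (u j - 1)) n +
  (sp - sv n adj alpha k).

Lemma row_identity n adj alpha Delta N (u : nat -> R) sp k :
  simple_graph n adj -> (k < n)%nat ->
  sumR (fun j => signless_laplacian n adj k j * (Rpower (deg n adj j) alpha * u j)) n =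
  Rpower (deg n adj k) alpha *
   (sp + (Delta - N) * (u k - 1) + N * sumR (fun j => u j - 1) n - slack n adj alpha Delta N u sp k).
Proof.
  intros [Hs Hirr] Hk. unfold signless_laplacian, slack, sv.
  set (dk := Rpower (deg n adj k) alpha).
  assert (Hdk : 0 < dk) by apply Rpower_pos.
  rewrite (sumR_ext _ (fun j => (if Nat.eqb k j then deg n adj k * (Rpower (deg n adj j) alpha * u j) else 0)
     + ((if adj k j then Rpower (deg n adj j) alpha else 0)
       + (if adj k j then Rpower (deg n adj j) alpha * (u j - 1) else 0)))).
  2:{ intros j _. destruct (Nat.eqb k j), (adj k j); ring. }
  rewrite sumR_plus, sumR_plus.
  rewrite (sumR_delta (fun j => deg n adj k * (Rpower (deg n adj j) alpha * u j))) by exact Hk.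
  rewrite <- gen_avg_mul. fold dk.
  rewrite (sumR_ext (fun j => if Nat.eqb k j then 0 else (N - (if adj k j then wr n adj alpha k j else 0)) * (u j - 1)) (fun j => N * (if Nat.eqb k j then 0 else u j - 1)
      - (/ dk) * (if adj k j then Rpower (deg n adj j) alpha * (u j - 1) else 0))).
  2:{ intros j Hj. unfold wr. fold dk. destruct (Nat.eqb_spec k j) as [->|].
      - rewrite Hirr by exact Hj. ring.
      - destruct (adj k j); field; lra. }
  rewrite (sumR_minus (fun j => N * (if Nat.eqb k j then 0 else u j - 1))
     (fun j => / dk * (if adj k j then Rpower (deg n adj j) alpha * (u j - 1) else 0))).
  rewrite (sumR_scal N), (sumR_scal (/ dk)).
  rewrite (sumR_ext (fun j => if Nat.eqb k j then 0 else u j - 1)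
     (fun j => (u j - 1) - (if Nat.eqb k j then u j - 1 else 0))).
  2:{ intros j _. destruct (Nat.eqb k j); ring. }
  rewrite (sumR_minus (fun j => u j - 1) (fun j => if Nat.eqb k j then u j - 1 else 0)).
  rewrite (sumR_delta (fun j => u j - 1)) by exact Hk.
  field. lra.
Qed.

Lemma find_t (s : nat -> R) i :
  (forall a b, (a <= b <= i)%nat -> s b <= s a) -> s i < s 0%nat ->
  exists t, (1 <= t <= i)%nat /\ (forall j, (j < t)%nat -> s i < s j) /\
            (forall j, (t <= j <= i)%nat -> s j = s i).
Proof.
  intros Hm H0.
  assert (Hi : (1 <= i)%nat) by (destruct i; [lra|lia]).
  assert (P : forall m, (m <= i)%nat -> (forall j, (j < m)%nat -> s i < s j) \/
     exists t, (1 <= t <= i)%nat /\ (forall j, (j < t)%nat -> s i < s j) /\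
            (forall j, (t <= j <= i)%nat -> s j = s i)).
  { induction m; intros Hmi.
    - left. intros; lia.
    - destruct (IHm ltac:(lia)) as [L|Rr]; [|right; exact Rr].
      destruct (Rlt_dec (s i) (s m)) as [Lt|Nlt].
      + left. intros j Hj. destruct (Nat.eq_dec j m) as [->|]; auto. apply L; lia.
      + right. exists m. assert (s i <= s m) by (apply Hm; lia).
        destruct (Nat.eq_dec m 0) as [->|]; [lra|].
        split; [lia|]. split; auto. intros j Hj.
        assert (s j <= s m) by (apply Hm; lia). assert (s i <= s j) by (apply Hm; lia). lra. }
  destruct (P i (le_n _)) as [L|Rr]; auto.
  exists i. split; [lia|]. split; auto. intros j Hj. replace j with i by lia. reflexivity.
Qed.

Lemma Rpower_mono x y a : 0 <= a -> 0 < y -> y <= x -> Rpower y a <= Rpower x a.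
Proof. intros Ha Hy Hxy. unfold Rpower. destruct Hxy as [L|L]; [|subst; lra].
  assert (ln y < ln x) by (apply ln_increasing; auto).
  assert (a * ln y <= a * ln x) by nra.
  destruct H0 as [L2|L2]; [left; apply exp_increasing; auto| rewrite L2; lra]. Qed.

Lemma div_bound x y P q : 0 < q -> x <= P -> q <= y -> 0 <= x -> x / y <= P / q.
Proof. intros Hq Hx Hy Hx0. unfold Rdiv.
  apply Rle_trans with (x * / q).
  - apply Rmult_le_compat_l; auto. apply Rinv_le_contravar; auto.
  - apply Rmult_le_compat_r; auto. left; apply Rinv_0_lt_compat; auto. Qed.

Theorem theorem4 (n : nat) (adj : nat -> nat -> bool) (alpha Delta N rho : R) :
  (2 <= n)%nat ->
  simple_graph n adj ->
  connected n adj ->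
  (forall k, (S k < n)%nat ->
     gen_avg_deg n adj alpha k + deg n adj k >=
     gen_avg_deg n adj alpha (S k) + deg n adj (S k)) ->
  is_max_degree n adj Delta ->
  is_max_ratio n adj alpha N ->
  spectral_radius n (signless_laplacian n adj) rho ->
  let s := fun k => gen_avg_deg n adj alpha k + deg n adj k in
  forall i, (i < n)%nat ->
    let bound :=
      (s i + Delta - N +
       sqrt ((s i - Delta + N) ^ 2 + 4 * N * sumR (fun k => s k - s i) i)) / 2 in
    rho <= bound /\
    (rho = bound <->
       ((forall k, (k < n)%nat -> s k = s 0%nat) \/
        (exists t, (1 <= t <= i)%nat /\
           ((alpha = 0 /\ bidegreed n adj /\
             (forall k, (k < t)%nat -> deg n adj k = INR n - 1) /\
             (forall k, (t <= k < n)%nat -> deg n adj k = deg n adj t) /\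
             INR n - 1 > deg n adj t) \/
            (alpha > 0 /\ bidegreed n adj /\
             s 0%nat > s 1%nat /\
             (forall k, (1 <= k < n)%nat -> s k = s 1%nat) /\
             deg n adj 0%nat = INR n - 1 /\
             (forall k, (1 <= k < n)%nat -> deg n adj k = deg n adj 1%nat) /\
             INR n - 1 > deg n adj 1%nat))))).
Proof.
  intros Hn Hsg Hc Hord HD HN Hrho s i Hi bound.
  pose proof Hsg as [Hsym Hirr].
  assert (Hmono : forall a b, (a <= b)%nat -> (b < n)%nat -> s b <= s a).
  { intros a b Hab Hb. induction b.
    - replace a with 0%nat by lia. lra.
    - destruct (Nat.eq_dec a (S b)) as [->|]; [lra|].
      assert (s (S b) <= s b) by (specialize (Hord b Hb); unfold s; lra).
      assert (s b <= s a) by (apply IHb; lia). lra. }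
  assert (Hdpos : forall k, (k < n)%nat -> 1 <= deg n adj k) by (intros; apply deg_pos; auto).
  assert (Hdle : forall k, (k < n)%nat -> deg n adj k <= INR n - 1) by (intros; apply deg_le; auto).
  assert (Hn1 : 1 <= INR n - 1) by (pose proof (le_INR 2 n Hn) as L; simpl in L; lra).
  assert (HNpos : 0 < N).
  { destruct HN as [[a [b [_ [_ [_ E]]]]] _]. rewrite <- E. unfold Rdiv.
    apply Rmult_lt_0_compat; [apply Rpower_pos|apply Rinv_0_lt_compat, Rpower_pos]. }
  assert (HDk : forall k, (k < n)%nat -> deg n adj k <= Delta) by (intros; apply HD; auto).
  assert (Hw : forall k j, (k < n)%nat -> (j < n)%nat -> adj k j = true -> wr n adj alpha k j <= N)
    by (intros; apply HN; auto).
  set (T := sumR (fun k => s k - s i) i).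
  assert (HTt : forall k, (k < i)%nat -> 0 <= s k - s i) by (intros; assert (s i <= s k) by (apply Hmono; lia); lra).
  assert (HT0 : 0 <= T) by (apply sumR_nonneg; auto).
  assert (HTz : T = 0 -> forall k, (k < i)%nat -> s k = s i).
  { intros E k Hk. assert (s k - s i = 0) by (apply (sumR_eq0 (fun k => s k - s i) i); auto). lra. }
  set (a0 := s i - Delta + N).
  set (R0 := sqrt (a0 ^ 2 + 4 * N * T)).
  assert (HR0 : 0 <= R0) by apply sqrt_pos.
  assert (HRR : R0 * R0 = a0 ^ 2 + 4 * N * T) by (apply sqrt_sqrt; assert (0 <= a0 ^ 2) by apply pow2_ge_0; assert (0 <= N * T) by (apply Rmult_le_pos; lra); lra).
  assert (Hb : bound = (s i + Delta - N + R0) / 2) by reflexivity.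
  clearbody bound. subst bound. set (th := (s i + Delta - N + R0) / 2).
  set (c := th - Delta + N).
  assert (HNT4 : 0 <= N * T) by (apply Rmult_le_pos; lra).
  assert (HRR' : R0 * R0 = a0 * a0 + 4 * (N * T)) by (rewrite HRR; ring).
  assert (Hra : a0 <= R0).
  { destruct (Rle_dec a0 R0) as [L|L]; auto. assert (R0 * R0 < a0 * a0) by nra. lra. }
  assert (Hra' : - a0 <= R0).
  { destruct (Rle_dec (-a0) R0) as [L|L]; auto. assert (R0 * R0 < a0 * a0) by nra. lra. }
  assert (Hthi : s i <= th) by (unfold th, a0 in *; lra).
  assert (Hcpos : 0 < T -> 0 < c).
  { intros P. assert (0 < N * T) by (apply Rmult_lt_0_compat; lra).
    assert (Hs : - a0 < R0).
    { destruct (Rlt_dec (-a0) R0) as [L|L]; auto. assert (R0 * R0 <= a0 * a0) by nra. lra. }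
    unfold c, th, a0 in *; lra. }
  assert (HNT : N * T = (th - s i) * c) by (unfold c, th; unfold a0 in HRR'; nra).
  set (u := fun k => if (k <? i)%nat then 1 + (s k - s i) / c else 1).
  set (sp := fun k => if (k <? i)%nat then s k else s i).
  set (S := sumR (fun j => u j - 1) n).
  set (g := th - s i - N * S).
  assert (Hcase : T = 0 \/ 0 < T) by lra.
  assert (Hu1 : forall k, 0 <= u k - 1).
  { intros k. unfold u. destruct (Nat.ltb_spec k i); [|lra].
    destruct Hcase as [E|P].
    - rewrite (HTz E k) by auto. unfold Rdiv. lra.
    - specialize (HTt k H). specialize (Hcpos P). assert (0 <= (s k - s i) / c) by (unfold Rdiv; apply Rmult_le_pos; [lra|left; apply Rinv_0_lt_compat; lra]). lra. }
  assert (HST : S * c = T).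
  { unfold S. rewrite (sumR_trunc _ i n).
    2: lia.
    2: { intros j Hj; unfold u. destruct (Nat.ltb_spec j i); [lia|ring]. }
    destruct Hcase as [E|P].
    - rewrite (sumR_ext _ (fun _ => 0)), sumR_zero. lra.
      intros j Hj. unfold u. destruct (Nat.ltb_spec j i); [|lia]. rewrite (HTz E j Hj). unfold Rdiv. ring.
    - rewrite (sumR_ext _ (fun j => / c * (s j - s i))), sumR_scal. fold T. field.
      specialize (Hcpos P); lra.
      intros j Hj. unfold u. destruct (Nat.ltb_spec j i); [|lia]. unfold Rdiv. ring. }
  assert (HS0 : T = 0 -> S = 0).
  { intros E. unfold S. rewrite (sumR_ext _ (fun _ => 0)), sumR_zero; auto.
    intros j _. unfold u. destruct (Nat.ltb_spec j i); [|ring]. rewrite (HTz E j) by auto. unfold Rdiv. ring. }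
  assert (Hg0 : 0 < T -> g = 0).
  { intros P. specialize (Hcpos P). unfold g.
    assert (N * S * c = (th - s i) * c) by (rewrite <- HNT, <- HST; ring).
    apply Rmult_eq_reg_r in H; [lra|lra]. }
  assert (Hg : 0 <= g).
  { destruct Hcase as [E|P]; [unfold g; rewrite (HS0 E); lra| rewrite (Hg0 P); lra]. }
  assert (Hthu : forall k, (k < n)%nat -> th * u k = sp k + (Delta - N) * (u k - 1) + N * S + g).
  { intros k Hk. unfold sp, u, g. destruct (Nat.ltb_spec k i); [|ring].
    destruct Hcase as [E|P].
    - rewrite (HTz E k) by auto. unfold Rdiv. ring.
    - specialize (Hcpos P). unfold c in *. field. lra. }
  set (sl := fun k => slack n adj alpha Delta N u (sp k) k).
  assert (Hsl : forall k, (k < n)%nat -> 0 <= sl k).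
  { intros k Hk. unfold sl, slack. change (sv n adj alpha k) with (s k).
    assert (0 <= (Delta - deg n adj k) * (u k - 1)) by (apply Rmult_le_pos; auto; specialize (HDk k Hk); lra).
    assert (0 <= sp k - s k).
    { unfold sp. destruct (Nat.ltb_spec k i); [lra|]. assert (s k <= s i) by (apply Hmono; lia). lra. }
    assert (0 <= sumR (fun j => if Nat.eqb k j then 0 else (N - (if adj k j then wr n adj alpha k j else 0)) * (u j - 1)) n).
    { apply sumR_nonneg. intros j Hj. destruct (Nat.eqb k j); [lra|]. apply Rmult_le_pos; auto.
      destruct (adj k j) eqn:E; [specialize (Hw k j Hk Hj E); lra|lra]. }
    lra. }
  set (v := fun k => Rpower (deg n adj k) alpha * u k).
  assert (Hv : forall k, (k < n)%nat -> 0 < v k).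
  { intros k _. unfold v. apply Rmult_lt_0_compat; [apply Rpower_pos|specialize (Hu1 k); lra]. }
  assert (Hrow : forall k, (k < n)%nat ->
    sumR (fun j => signless_laplacian n adj k j * v j) n = Rpower (deg n adj k) alpha * (th * u k - (sl k + g))).
  { intros k Hk. unfold v. rewrite (row_identity n adj alpha Delta N u (sp k) k Hsg Hk).
    fold S. rewrite (Hthu k Hk). unfold sl. ring. }
  assert (Hle : forall k, (k < n)%nat -> sumR (fun j => signless_laplacian n adj k j * v j) n <= th * v k).
  { intros k Hk. rewrite Hrow by exact Hk. unfold v.
    assert (0 < Rpower (deg n adj k) alpha) by apply Rpower_pos. specialize (Hsl k Hk). nra. }
  assert (HQnn : forall k j, (k < n)%nat -> (j < n)%nat -> 0 <= signless_laplacian n adj k j).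
  { intros k j _ _. unfold signless_laplacian. pose proof (deg_nonneg n adj k).
    destruct (Nat.eqb k j), (adj k j); lra. }
  assert (HQpos : forall k j, (k < n)%nat -> (j < n)%nat -> adj k j = true -> 0 < signless_laplacian n adj k j).
  { intros k j _ _ E. unfold signless_laplacian. rewrite E. pose proof (deg_nonneg n adj k).
    destruct (Nat.eqb k j); lra. }
  assert (Hineq : rho <= th).
  { destruct Hrho as [[lam [Hl El]] _]. rewrite <- El.
    apply (maxarg n (signless_laplacian n adj) v); auto. }
  assert (Heq1 : rho = th -> forall k, (k < n)%nat -> sl k + g = 0).
  { intros E k Hk. destruct Hrho as [[lam [Hl El]] _].
    pose proof (maxarg_eq n adj (signless_laplacian n adj) v th lam Hc HQnn HQpos Hv Hle Hl ltac:(lra) k Hk) as Z.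
    rewrite Hrow in Z by exact Hk. unfold v in Z.
    assert (0 < Rpower (deg n adj k) alpha) by apply Rpower_pos.
    assert (Rpower (deg n adj k) alpha * (sl k + g) = 0) by nra.
    apply Rmult_integral in H0. destruct H0; lra. }
  assert (Heq2 : (forall k, (k < n)%nat -> sl k + g = 0) -> rho = th).
  { intros Z. apply Rle_antisym; auto. destruct Hrho as [_ Hmax].
    eapply Rle_trans; [apply Rle_abs|]. apply Hmax. exists v. split.
    - exists 0%nat. split; [lia|]. specialize (Hv 0%nat ltac:(lia)). lra.
    - intros k Hk. rewrite Hrow by exact Hk. rewrite Z by exact Hk. unfold v. ring. }
  split; [exact Hineq|].
  assert (Hsl_fwd : forall k, (k < n)%nat -> sl k = 0 ->
     (Delta - deg n adj k) * (u k - 1) = 0 /\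
     (forall j, (j < n)%nat -> k <> j -> (N - (if adj k j then wr n adj alpha k j else 0)) * (u j - 1) = 0) /\
     sp k = s k).
  { intros k Hk Z. unfold sl, slack in Z. change (sv n adj alpha k) with (s k) in Z.
    assert (H1 : 0 <= (Delta - deg n adj k) * (u k - 1)) by (apply Rmult_le_pos; auto; specialize (HDk k Hk); lra).
    assert (H3 : 0 <= sp k - s k).
    { unfold sp. destruct (Nat.ltb_spec k i); [lra|]. assert (s k <= s i) by (apply Hmono; lia). lra. }
    assert (Hterm : forall j, (j < n)%nat -> 0 <= (if Nat.eqb k j then 0 else (N - (if adj k j then wr n adj alpha k j else 0)) * (u j - 1))).
    { intros j Hj. destruct (Nat.eqb k j); [lra|]. apply Rmult_le_pos; auto.
      destruct (adj k j) eqn:E; [specialize (Hw k j Hk Hj E); lra|lra]. }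
    assert (H2 := sumR_nonneg _ n Hterm).
    split; [lra|]. split; [|lra].
    intros j Hj Hkj.
    assert (Q := sumR_eq0 _ n Hterm ltac:(lra) j Hj). simpl in Q.
    destruct (Nat.eqb_spec k j); [lia|exact Q]. }
  assert (Hsl_bwd : forall k, (k < n)%nat ->
     (Delta - deg n adj k) * (u k - 1) = 0 ->
     (forall j, (j < n)%nat -> k <> j -> (N - (if adj k j then wr n adj alpha k j else 0)) * (u j - 1) = 0) ->
     sp k = s k -> sl k = 0).
  { intros k Hk A B C. unfold sl, slack. change (sv n adj alpha k) with (s k).
    rewrite (sumR_ext _ (fun _ => 0)), sumR_zero. lra.
    intros j Hj. destruct (Nat.eqb_spec k j); [reflexivity|]. apply B; auto. }
  assert (Hu_alt : forall j, (j < n)%nat -> u j = 1 \/ (s i < s j /\ 0 < u j - 1)).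
  { intros j Hj. unfold u. destruct (Nat.ltb_spec j i); [|left; reflexivity].
    assert (s i <= s j) by (apply Hmono; lia). destruct H0 as [L|L].
    - right. split; auto. assert (0 < T).
      { apply Rlt_le_trans with (s j - s i); [lra|]. apply (sumR_ge_term (fun k => s k - s i)); auto. }
      specialize (Hcpos H0). assert (0 < (s j - s i) / c) by (apply Rdiv_lt_0_compat; lra). lra.
    - left. rewrite L. unfold Rdiv. ring. }
  assert (Hgen : 0 < T -> (forall k, (i <= k < n)%nat -> s k = s i) ->
     (forall j, (j < n)%nat -> s i < s j -> deg n adj j = Delta /\
        forall k, (k < n)%nat -> k <> j -> adj k j = true /\ wr n adj alpha k j = N) ->
     forall k, (k < n)%nat -> sl k + g = 0).
  { intros P Hc' Hhub k Hk. rewrite (Hg0 P). rewrite Rplus_0_r. apply Hsl_bwd; auto.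
    - destruct (Hu_alt k Hk) as [E|[L _]]; [rewrite E; ring|]. rewrite (proj1 (Hhub k Hk L)). ring.
    - intros j Hj Hkj. destruct (Hu_alt j Hj) as [E|[L _]]; [rewrite E; ring|].
      destruct (proj2 (Hhub j Hj L) k Hk ltac:(lia)) as [E1 E2]. rewrite E1, E2. ring.
    - unfold sp. destruct (Nat.ltb_spec k i); [reflexivity|]. symmetry; apply Hc'; lia. }
  assert (HTpos_of : forall k, (k < i)%nat -> s i < s k -> 0 < T).
  { intros k Hk L. apply Rlt_le_trans with (s k - s i); [lra|].
    apply (sumR_ge_term (fun k => s k - s i)); auto. }
  assert (Hs0T : 0 < T -> s i < s 0%nat).
  { intros P. destruct (Rlt_dec (s i) (s 0%nat)) as [L|L]; auto.
    assert (T = 0); [|lra]. unfold T. rewrite (sumR_ext _ (fun _ => 0)), sumR_zero; auto.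
    intros k Hk. assert (s k <= s 0%nat) by (apply Hmono; lia). specialize (HTt k Hk). lra. }
  assert (Hs2 : alpha = 0 -> forall k, s k = 2 * deg n adj k).
  { intros A0 k. unfold s. rewrite A0, gen_avg_zero. ring. }
  assert (HN0 : alpha = 0 -> N = 1).
  { intros A0. destruct HN as [[a [b [_ [_ [_ E]]]]] _]. rewrite <- E, A0, !Rpower_zero. field. }
  assert (Hdeg0 : forall j, (j < n)%nat -> (forall k, (k < n)%nat -> k <> j -> adj k j = true) ->
                  deg n adj j = INR n - 1).
  { intros j Hj H. apply deg_full; auto. intros k Hk Hkj. rewrite Hsym by auto. apply H; auto. }
  assert (Hadjfull : forall j, (j < n)%nat -> deg n adj j = INR n - 1 ->
                  forall k, (k < n)%nat -> k <> j -> adj k j = true).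
  { intros j Hj Hd k Hk Hkj. rewrite Hsym by auto. apply (full_of_deg n adj j); auto. }
  assert (HDn : deg n adj 0%nat = INR n - 1 -> Delta = INR n - 1).
  { intros Hd0. destruct HD as [[p [Hp Ep]] _]. specialize (HDk 0%nat ltac:(lia)).
    specialize (Hdle p Hp). lra. }
  split.
  -
    intros Hth. pose proof (Heq1 Hth) as Z.
    assert (Hslk : forall k, (k < n)%nat -> sl k = 0).
    { intros k Hk. pose proof (Z k Hk). pose proof (Hsl k Hk). pose proof (Z 0%nat ltac:(lia)).
      pose proof (Hsl 0%nat ltac:(lia)). pose proof (Z k Hk).
      assert (0 <= g) by exact Hg. lra. }
    assert (Hgz : g = 0).
    { specialize (Z 0%nat ltac:(lia)). specialize (Hsl 0%nat ltac:(lia)). lra. }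
    assert (Hc' : forall k, (i <= k < n)%nat -> s k = s i).
    { intros k Hk. destruct (Hsl_fwd k ltac:(lia) (Hslk k ltac:(lia))) as [_ [_ C]].
      unfold sp in C. destruct (Nat.ltb_spec k i); [lia|]. lra. }
    destruct Hcase as [E|P].
    + left. assert (Hall : forall k, (k < n)%nat -> s k = s i).
      { intros k Hk. destruct (Nat.lt_ge_cases k i); [apply HTz; auto|apply Hc'; lia]. }
      intros k Hk. rewrite (Hall k Hk), (Hall 0%nat ltac:(lia)). reflexivity.
    + right.
      assert (Hhub : forall j, (j < n)%nat -> s i < s j ->
                 forall k, (k < n)%nat -> k <> j -> adj k j = true /\ wr n adj alpha k j = N).
      { intros j Hj L k Hk Hkj. destruct (Hu_alt j Hj) as [Eu|[_ Pu]].
        - assert (HH : (j < i)%nat) by (destruct (Nat.lt_ge_cases j i); auto; specialize (Hc' j ltac:(lia)); lra).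
          unfold u in Eu. destruct (Nat.ltb_spec j i); [|lia].
          specialize (Hcpos P). assert (0 < (s j - s i) / c) by (apply Rdiv_lt_0_compat; lra). lra.
        - destruct (Hsl_fwd k Hk (Hslk k Hk)) as [_ [B _]]. specialize (B j Hj ltac:(lia)).
          apply Rmult_integral in B. destruct B as [B|B]; [|lra].
          destruct (adj k j); [split; [reflexivity|lra]|lra]. }
      assert (Hs0 := Hs0T P).
      assert (Hi1 : (1 <= i)%nat) by (destruct i; [lra|lia]).
      assert (H0d : deg n adj 0%nat = INR n - 1).
      { apply Hdeg0; [lia|]. intros k Hk Hk0. apply (Hhub 0%nat ltac:(lia) Hs0 k Hk Hk0). }
      destruct (Req_dec alpha 0) as [A0|A0].
      * destruct (find_t s i) as [t [Ht [Hlt Heqt]]]; auto.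
        { intros a b Hab. apply Hmono; lia. }
        exists t. split; [exact Ht|]. left.
        assert (Hdt : forall k, (k < t)%nat -> deg n adj k = INR n - 1).
        { intros k Hk. apply Hdeg0; [lia|]. intros k' Hk' Hne. apply (Hhub k ltac:(lia) (Hlt k Hk) k' Hk' Hne). }
        assert (Hst : forall k, (t <= k < n)%nat -> s k = s i).
        { intros k Hk. destruct (Nat.le_gt_cases k i); [apply Heqt; lia|apply Hc'; lia]. }
        assert (Hdtt : forall k, (t <= k < n)%nat -> deg n adj k = deg n adj t).
        { intros k Hk. pose proof (Hst k Hk). pose proof (Hst t ltac:(lia)).
          rewrite !(Hs2 A0) in *. lra. }
        assert (Hgt : INR n - 1 > deg n adj t).
        { pose proof (Hst t ltac:(lia)). rewrite !(Hs2 A0) in *. lra. }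
        split; [exact A0|]. split; [|split; [exact Hdt|split; [exact Hdtt|exact Hgt]]].
        exists (INR n - 1), (deg n adj t). split; [lra|]. split; [exists 0%nat; split; [lia|auto]|].
        split; [exists t; split; [lia|reflexivity]|].
        intros k Hk. destruct (Nat.lt_ge_cases k t); [left; auto|right; apply Hdtt; lia].
      * assert (Hw0 : forall k, (k < n)%nat -> k <> 0%nat ->
                  Rpower (deg n adj k) alpha = Rpower (deg n adj 0%nat) alpha / N).
        { intros k Hk Hk0. destruct (Hhub 0%nat ltac:(lia) Hs0 k Hk Hk0) as [_ W].
          unfold wr in W. rewrite <- W. pose proof (Rpower_pos (deg n adj k) alpha).
          pose proof (Rpower_pos (deg n adj 0%nat) alpha). field. lra. }
        assert (Hd1 : forall k, (1 <= k < n)%nat -> deg n adj k = deg n adj 1%nat).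
        { intros k Hk. apply (Rpower_inj _ _ alpha); auto.
          - specialize (Hdpos k ltac:(lia)). lra.
          - specialize (Hdpos 1%nat ltac:(lia)). lra.
          - rewrite (Hw0 k), (Hw0 1%nat) by lia. reflexivity. }
        assert (HN1 : N <> 1).
        { intros E1. assert (Hall : forall k, (k < n)%nat -> deg n adj k = INR n - 1).
          { intros k Hk. destruct (Nat.eq_dec k 0) as [->|]; auto. apply (Rpower_inj _ _ alpha); auto.
            - specialize (Hdpos k ltac:(lia)). lra.
            - lra.
            - rewrite Hw0 by lia. rewrite H0d, E1. field. }
          assert (forall k, (k < n)%nat -> s k = 2 * (INR n - 1)).
          { intros k Hk. unfold s. rewrite (gen_avg_const n adj alpha k (INR n - 1)); auto.
            rewrite Hall by auto. ring. }
          rewrite (H 0%nat ltac:(lia)), (H i Hi) in Hs0. lra. }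
        assert (Hs1 : s 1%nat = s i).
        { assert (s i <= s 1%nat) by (apply Hmono; lia). destruct H as [L|L]; auto.
          destruct (Hhub 1%nat ltac:(lia) L 0%nat ltac:(lia) ltac:(lia)) as [_ W].
          assert (deg n adj 1%nat = INR n - 1).
          { apply Hdeg0; [lia|]. intros k' Hk' Hne. apply (Hhub 1%nat ltac:(lia) L k' Hk' Hne). }
          unfold wr in W. rewrite H, H0d in W. exfalso. apply HN1. rewrite <- W. field.
          pose proof (Rpower_pos (INR n - 1) alpha). lra. }
        assert (W10 : wr n adj alpha 1%nat 0%nat = N) by
          (apply (Hhub 0%nat ltac:(lia) Hs0 1%nat ltac:(lia) ltac:(lia))).
        assert (A01 : adj 0%nat 1%nat = true).
        { rewrite Hsym by lia. apply (Hhub 0%nat ltac:(lia) Hs0 1%nat ltac:(lia) ltac:(lia)). }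
        assert (HNge : 1 <= N).
        { pose proof (Hw 0%nat 1%nat ltac:(lia) ltac:(lia) A01) as W01.
          unfold wr in W01, W10.
          assert (Rpower (deg n adj 1%nat) alpha / Rpower (deg n adj 0%nat) alpha = / N).
          { rewrite <- W10. pose proof (Rpower_pos (deg n adj 1%nat) alpha).
            pose proof (Rpower_pos (deg n adj 0%nat) alpha). field. lra. }
          rewrite H in W01.
          destruct (Rle_dec 1 N) as [L|L]; auto.
          assert (N < 1) by lra. assert (1 < / N).
          { rewrite <- Rinv_1. apply Rinv_lt_contravar; lra. }
          lra. }
        assert (Hd1lt : deg n adj 1%nat < INR n - 1).
        { specialize (Hdle 1%nat ltac:(lia)). destruct Hdle as [L|L]; auto.
          exfalso. apply HN1. rewrite <- W10. unfold wr. rewrite L, H0d. field.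
          pose proof (Rpower_pos (INR n - 1) alpha). lra. }
        assert (Hapos : alpha > 0).
        { destruct (Rtotal_order alpha 0) as [L|[L|L]]; [|lra|lra].
          assert (Rpower (INR n - 1) alpha <= Rpower (deg n adj 1%nat) alpha).
          { apply Rpower_antimono; [lra| |lra]. specialize (Hdpos 1%nat ltac:(lia)). lra. }
          unfold wr in W10. rewrite H0d in W10.
          assert (N <= 1); [|lra]. rewrite <- W10.
          pose proof (Rpower_pos (deg n adj 1%nat) alpha).
          apply (Rmult_le_reg_r (Rpower (deg n adj 1%nat) alpha)); auto.
          unfold Rdiv. rewrite Rmult_assoc, Rinv_l by lra. lra. }
        exists 1%nat. split; [lia|]. right.
        split; [exact Hapos|]. split.
        { exists (INR n - 1), (deg n adj 1%nat). split; [lra|].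
          split; [exists 0%nat; split; [lia|auto]|]. split; [exists 1%nat; split; [lia|reflexivity]|].
          intros k Hk. destruct (Nat.eq_dec k 0) as [->|]; [left; auto|right; apply Hd1; lia]. }
        split; [lra|]. split.
        { intros k Hk. rewrite Hs1. destruct (Nat.le_gt_cases k i).
          - assert (s k <= s 1%nat) by (apply Hmono; lia). assert (s i <= s k) by (apply Hmono; lia). lra.
          - apply Hc'; lia. }
        split; [exact H0d|]. split; [exact Hd1|lra].
  -
    intros Halt. apply Heq2.
    destruct Halt as [Hall | [t [Ht [A2 | A3]]]].
    + assert (Hsi : forall k, (k < n)%nat -> s k = s i).
      { intros k Hk. rewrite (Hall k Hk), (Hall i Hi). reflexivity. }
      assert (E : T = 0).
      { unfold T. rewrite (sumR_ext _ (fun _ => 0)), sumR_zero; auto. intros k Hk. rewrite Hsi by lia. ring. }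
      assert (Ha0 : 0 < a0).
      { destruct HD as [[p [Hp Ep]] _]. unfold a0. rewrite <- (Hsi p Hp). unfold s.
        pose proof (gen_avg_nonneg n adj alpha p). lra. }
      assert (HR0a : R0 = a0).
      { rewrite E in HRR'. assert ((R0 - a0) * (R0 + a0) = 0) by nra.
        apply Rmult_integral in H. lra. }
      assert (Hthe : th = s i) by (unfold th; rewrite HR0a; unfold a0; field).
      intros k Hk.
      assert (Hgz : g = 0) by (unfold g; rewrite (HS0 E); lra).
      rewrite Hgz, Rplus_0_r.
      assert (Hu : forall j, (j < n)%nat -> u j = 1).
      { intros j Hj. destruct (Hu_alt j Hj) as [U|[L _]]; auto. rewrite (Hsi j Hj) in L. lra. }
      apply Hsl_bwd; auto.
      * rewrite Hu by auto. ring.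
      * intros j Hj _. rewrite Hu by auto. ring.
      * unfold sp. destruct (Nat.ltb k i); auto. rewrite (Hsi k Hk). reflexivity.
    + destruct A2 as [A0 [_ [Hdt [Hdtt Hgt]]]].
      assert (H0d : deg n adj 0%nat = INR n - 1) by (apply Hdt; lia).
      assert (HDe := HDn H0d).
      assert (HN1 := HN0 A0).
      assert (Hsi : s i = 2 * deg n adj t).
      { rewrite (Hs2 A0). rewrite (Hdtt i) by lia. reflexivity. }
      apply Hgen.
      * apply (HTpos_of 0%nat); [lia|]. rewrite Hsi, (Hs2 A0 0%nat), H0d. lra.
      * intros k Hk. rewrite Hsi, (Hs2 A0 k), (Hdtt k) by lia. reflexivity.
      * intros j Hj L. assert (Hjt : (j < t)%nat).
        { destruct (Nat.lt_ge_cases j t); auto. rewrite Hsi, (Hs2 A0 j), (Hdtt j) in L by lia. lra. }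
        split; [rewrite Hdt by auto; lra|].
        intros k Hk Hkj. split; [apply Hadjfull; auto|].
        unfold wr. rewrite A0, !Rpower_zero, HN1. field.
    + destruct A3 as [Hapos [_ [H01 [Hs1 [H0d [Hd1 Hgt]]]]]].
      assert (HDe := HDn H0d).
      assert (Hsi : s i = s 1%nat) by (apply Hs1; lia).
      assert (Hdpos1 := Hdpos 1%nat ltac:(lia)).
      assert (Hbnd : forall k, (k < n)%nat -> deg n adj 1%nat <= deg n adj k <= INR n - 1).
      { intros k Hk. split; [|apply Hdle; auto]. destruct (Nat.eq_dec k 0) as [->|]; [lra|].
        rewrite (Hd1 k) by lia. lra. }
      assert (HNv : N = Rpower (INR n - 1) alpha / Rpower (deg n adj 1%nat) alpha).
      { apply Rle_antisym.
        - destruct HN as [[a [b [Ha [Hb [_ E]]]]] _]. rewrite <- E.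
          apply div_bound; [apply Rpower_pos| | |left; apply Rpower_pos].
          + apply Rpower_mono; [lra|specialize (Hdpos b Hb); lra|apply Hbnd; auto].
          + apply Rpower_mono; [lra|lra|apply Hbnd; auto].
        - rewrite <- H0d. apply (Hw 1%nat 0%nat); [lia|lia|].
          apply Hadjfull; auto; lia. }
      apply Hgen.
      * apply (HTpos_of 0%nat); [lia|]. lra.
      * intros k Hk. rewrite Hsi. apply Hs1; lia.
      * intros j Hj L. assert (j = 0%nat).
        { destruct (Nat.eq_dec j 0); auto. rewrite Hsi, (Hs1 j) in L by lia. lra. }
        subst j. split; [lra|]. intros k Hk Hk0. split; [apply Hadjfull; auto|].
        unfold wr. rewrite H0d, (Hd1 k) by lia. rewrite HNv. reflexivity.
Qed.
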